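(* Let $L$ be a linear forest with $k$ vertices and let $P_n$ be the path with vertices $w_1,\dots,w_n$ in order. For an index $h$, let $s'_h(P_n,L)$ be the number of vertex subsets $X\subseteq V(P_n)$ with $w_h\in X$ such that $P_n[X]$ is isomorphic to $L$ and $w_h$ is an isolated vertex of $P_n[X]$. Then $s'_h(P_n,L)$ has the same value for all $h$ with $k\le h\le n-k+1$.
   Context: A linear forest is a disjoint union of paths; $P_n[X]$ denotes the subgraph of $P_n$ induced by $X$. *)

(* Defs.v *)
From mathcomp Require Import all_boot.
Set Implicit Arguments. Unset Strict Implicit. Unset Printing Implicit Defensive.

(* Adjacency in the path P_n on vertices 'I_n (vertex w_h is the ordinal h-1). *)
Definition path_adj (i j : nat) : bool := (i.+1 == j) || (j.+1 == i).

(* A simple graph on a finite type T is a symmetric relation e; it is a linear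
   forest (disjoint union of paths) iff its vertices can be placed injectively
   on the integer line so that every edge joins two consecutive integers, i.e.
   it is a (not necessarily spanning-connected) subgraph of a path obtained by
   deleting edges. *)
Definition linear_forest (T : finType) (e : rel T) : Prop :=
  exists f : T -> nat, injective f /\
    forall u v, e u v -> path_adj (f u) (f v).

Definition induced_iso (n : nat) (X : {set 'I_n}) (T : finType) (e : rel T) : bool :=
  [exists g : {ffun T -> 'I_n},
     [&& injectiveb g, (g @: [set: T]) == X &
        [forall u, forall v, e u v == path_adj (g u) (g v)]]].

Definition wv (h : nat) : nat := h.-1.

Definition s_prime (n h : nat) (T : finType) (e : rel T) : nat :=
  #|[set X : {set 'I_n} |
      [&& [exists x in X, val x == wv h],
          [forall x in X, ~~ path_adj (wv h) (val x)] &
          induced_iso X e]]|.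

(* Main.v *)
Require Import Defs.
From mathcomp Require Import all_boot zify.
Set Implicit Arguments. Unset Strict Implicit. Unset Printing Implicit Defensive.

Definition memn {N} (Y : {set 'I_N}) (i : nat) : bool := [exists y in Y, nat_of_ord y == i].
Definition subw {N} (D : pred nat) (Y : {set 'I_N}) : bool := [forall y in Y, D (nat_of_ord y)].
Definition img {N} (f : nat -> nat) (Y : {set 'I_N}) : {set 'I_N} :=
  [set z : 'I_N | [exists x in Y, f (nat_of_ord x) == nat_of_ord z]].
Definition Iv N (a b : nat) : {set 'I_N} := [set y : 'I_N | a <= nat_of_ord y < b].
Definition iso {N} (X Y : {set 'I_N}) : Prop := exists f : nat -> nat,
  [/\ (forall x, x \in X -> memn Y (f (nat_of_ord x))),
      (forall y, y \in Y -> exists2 x, x \in X & f (nat_of_ord x) = nat_of_ord y),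
      (forall x y, x \in X -> y \in X -> f (nat_of_ord x) = f (nat_of_ord y) -> x = y) &
      (forall x y, x \in X -> y \in X -> path_adj (f (nat_of_ord x)) (f (nat_of_ord y)) = path_adj (nat_of_ord x) (nat_of_ord y))].
Definition inv {N} (D : pred nat) (Q : {set 'I_N} -> bool) : Prop :=
  forall X Y, subw D X -> subw D Y -> iso X Y -> Q X -> Q Y.
Definition cnt {N} (D : pred nat) (Q P : {set 'I_N} -> bool) : nat :=
  #|[set Y : {set 'I_N} | [&& subw D Y, Q Y & P Y]]|.

Lemma memnP N (Y : {set 'I_N}) i : reflect (exists2 y, y \in Y & nat_of_ord y = i) (memn Y i).
Proof.
apply: (iffP exists_inP) => [[y yY /eqP e]|[y yY e]]; exists y => //; exact/eqP.
Qed.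

Lemma subwP N (D : pred nat) (Y : {set 'I_N}) : reflect (forall y, y \in Y -> D (nat_of_ord y)) (subw D Y).
Proof. exact: forall_inP. Qed.

Lemma card_bij (T1 T2 : finType) (A : {set T1}) (B : {set T2}) (F : T1 -> T2) (G : T2 -> T1) :
  {in A, forall x, F x \in B} -> {in B, forall y, G y \in A} ->
  {in A, cancel F G} -> {in B, cancel G F} -> #|A| = #|B|.
Proof.
move=> FA GB FG GF; apply/eqP; rewrite eqn_leq; apply/andP; split.
  rewrite -(card_in_imset (can_in_inj FG)); apply: subset_leq_card.
  by apply/subsetP => _ /imsetP [x xA ->]; exact: FA.
rewrite -(card_in_imset (can_in_inj GF)); apply: subset_leq_card.
by apply/subsetP => _ /imsetP [x xA ->]; exact: GB.
Qed.

Lemma cnt_split N (D : pred nat) (Q P : {set 'I_N} -> bool) (b : {set 'I_N} -> bool) :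
  cnt D Q P = cnt D Q (fun Y => P Y && b Y) + cnt D Q (fun Y => P Y && ~~ b Y).
Proof.
rewrite /cnt -(cardsID [set Y : {set 'I_N} | b Y]); congr (_ + _); apply: eq_card => Y;
  rewrite !inE; by case: (subw D Y); case: (Q Y); case: (P Y); case: (b Y).
Qed.

Lemma cnt_ext N (D D' : pred nat) (Q : {set 'I_N} -> bool) (P P' : {set 'I_N} -> bool) :
  (forall Y, Q Y -> (subw D Y && P Y) = (subw D' Y && P' Y)) -> cnt D Q P = cnt D' Q P'.
Proof.
move=> H; apply: eq_card => Y; rewrite !inE.
case QY: (Q Y); last by rewrite !andbF.
by have := H Y QY; case: (subw D Y); case: (P Y); case: (subw D' Y); case: (P' Y).
Qed.

Lemma subw_eq N (D D' : pred nat) (Y : {set 'I_N}) : (forall x, D x = D' x) -> subw D Y = subw D' Y.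
Proof. by move=> H; apply: eq_forallb => y; rewrite H. Qed.

Lemma subw_mono N (D D' : pred nat) (Y : {set 'I_N}) : (forall x, D x -> D' x) -> subw D Y -> subw D' Y.
Proof. by move=> H /subwP S; apply/subwP => y /S /H. Qed.

Lemma subw_notmem N (D : pred nat) (Y : {set 'I_N}) a :
  subw (fun x => D x && (x != a)) Y = subw D Y && ~~ memn Y a.
Proof.
apply/subwP/andP => [H|[/subwP H1 H2] y yY].
  split; first by apply/subwP => y /H /andP [].
  by apply/memnP => [[y yY e]]; move: (H y yY); rewrite e eqxx andbF.
rewrite H1 //=; apply/eqP => e; case/memnP: H2; by exists y.
Qed.

Lemma subwU N (D : pred nat) (A B : {set 'I_N}) : subw D (A :|: B) = subw D A && subw D B.
Proof.
apply/subwP/andP => [H|[/subwP H1 /subwP H2] y]; last by rewrite inE => /orP [/H1|/H2].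
by split; apply/subwP => y yA; apply: H; rewrite inE yA ?orbT.
Qed.

Lemma memn_img N (f : nat -> nat) (Y : {set 'I_N}) n :
  (forall y, y \in Y -> f (nat_of_ord y) < N) -> memn (img f Y) n = [exists x in Y, f (nat_of_ord x) == n].
Proof.
move=> H; apply/idP/idP.
  case/memnP => z; rewrite inE => /exists_inP [x xY /eqP fx] zn.
  by apply/exists_inP; exists x => //; rewrite fx zn.
case/exists_inP => x xY /eqP fx; apply/memnP; exists (Ordinal (H x xY)) => //.
by rewrite inE; apply/exists_inP; exists x.
Qed.

Lemma memn_img_in N (D : pred nat) f (Y : {set 'I_N}) a b :
  subw D Y -> (forall x, D x -> f x < N) -> (forall x y, D x -> D y -> f x = f y -> x = y) ->
  D a -> f a = b -> memn (img f Y) b = memn Y a.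
Proof.
move=> /subwP sY fN fi Da fab; rewrite memn_img; last by move=> y /sY /fN.
apply/exists_inP/memnP => [[x xY /eqP fx]|[x xY xa]]; exists x => //.
  by apply: fi; rewrite ?fx ?sY.
by rewrite xa fab.
Qed.

Lemma img_iso N (D : pred nat) f (Y : {set 'I_N}) :
  subw D Y -> (forall x, D x -> f x < N) -> (forall x y, D x -> D y -> f x = f y -> x = y) ->
  (forall x y, D x -> D y -> path_adj (f x) (f y) = path_adj x y) -> iso Y (img f Y).
Proof.
move=> /subwP sY fN fi fa; exists f; split.
- move=> x xY; rewrite memn_img; last by move=> y /sY /fN.
  by apply/exists_inP; exists x.
- by move=> y; rewrite inE => /exists_inP [x xY /eqP e]; exists x.
- by move=> x y xY yY e; apply: ord_inj; apply: fi; rewrite ?sY.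
- by move=> x y xY yY; apply: fa; rewrite ?sY.
Qed.

Lemma img_img N (D : pred nat) f g (Y : {set 'I_N}) :
  subw D Y -> (forall x, D x -> f x < N) -> (forall x, D x -> g (f x) = x) -> img g (img f Y) = Y.
Proof.
move=> /subwP sY fN gf; apply/setP => z; rewrite inE; apply/idP/idP.
  case/exists_inP => y; rewrite inE => /exists_inP [x xY /eqP fx] /eqP gy.
  suff -> : z = x by [].
  by apply: ord_inj; rewrite -gy -fx gf ?sY.
move=> zY; apply/exists_inP; exists (Ordinal (fN _ (sY z zY))).
  by rewrite inE; apply/exists_inP; exists z.
by rewrite /= gf ?sY.
Qed.

Lemma subw_img N (D D' : pred nat) f (Y : {set 'I_N}) :
  subw D Y -> (forall x, D x -> D' (f x)) -> subw D' (img f Y).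
Proof.
move=> /subwP sY H; apply/subwP => z; rewrite inE => /exists_inP [x xY /eqP <-].
by apply: H; apply: sY.
Qed.

Lemma transport N (D1 D2 : pred nat) f g (Q1 Q2 P1 P2 : {set 'I_N} -> bool) :
  (forall x, D1 x -> D2 (f x)) -> (forall y, D2 y -> D1 (g y)) ->
  (forall x, D1 x -> g (f x) = x) -> (forall y, D2 y -> f (g y) = y) ->
  (forall x, D1 x -> f x < N) -> (forall y, D2 y -> g y < N) ->
  (forall Y, subw D1 Y -> Q1 Y -> Q2 (img f Y)) -> (forall Y, subw D2 Y -> Q2 Y -> Q1 (img g Y)) ->
  (forall Y, subw D1 Y -> P2 (img f Y) = P1 Y) ->
  cnt D1 Q1 P1 = cnt D2 Q2 P2.
Proof.
move=> fD gD gf fg fN gN Q12 Q21 P21.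
apply: (card_bij (F := img f) (G := img g)).
- move=> Y; rewrite !inE => /and3P [sY QY PY].
  by rewrite (subw_img sY fD) Q12 // P21.
- move=> Y; rewrite !inE => /and3P [sY QY PY].
  have sY' := subw_img sY gD.
  rewrite sY' Q21 //= -(P21 _ sY') (img_img sY gN fg) //.
- by move=> Y; rewrite inE => /and3P [sY _ _]; exact: img_img sY fN gf.
- by move=> Y; rewrite inE => /and3P [sY _ _]; exact: img_img sY gN fg.
Qed.

Lemma transport_inv N (W D1 D2 : pred nat) f g (Q P1 P2 : {set 'I_N} -> bool) :
  inv W Q -> (forall x, D1 x -> W x) -> (forall x, D2 x -> W x) ->
  (forall x, D1 x -> D2 (f x)) -> (forall y, D2 y -> D1 (g y)) ->
  (forall x, D1 x -> g (f x) = x) -> (forall y, D2 y -> f (g y) = y) ->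
  (forall x, D1 x -> f x < N) -> (forall y, D2 y -> g y < N) ->
  (forall x y, D1 x -> D1 y -> path_adj (f x) (f y) = path_adj x y) ->
  (forall Y, subw D1 Y -> P2 (img f Y) = P1 Y) ->
  cnt D1 Q P1 = cnt D2 Q P2.
Proof.
move=> HQ W1 W2 fD gD gf fg fN gN fa P21.
have gi : forall x y, D2 x -> D2 y -> g x = g y -> x = y.
  by move=> x y Dx Dy e; rewrite -(fg x) // -(fg y) // e.
have fi : forall x y, D1 x -> D1 y -> f x = f y -> x = y.
  by move=> x y Dx Dy e; rewrite -(gf x) // -(gf y) // e.
have ga : forall x y, D2 x -> D2 y -> path_adj (g x) (g y) = path_adj x y.
  by move=> x y Dx Dy; rewrite -fa ?gD // !fg.
refine (transport fD gD gf fg fN gN _ _ P21).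
- move=> Y sY QY; apply: (HQ Y) QY; first exact: subw_mono sY.
    exact: subw_mono (subw_img sY fD).
  exact: img_iso sY fN fi fa.
- move=> Y sY QY; apply: (HQ Y) QY; first exact: subw_mono sY.
    exact: subw_mono (subw_img sY gD).
  exact: img_iso sY gN gi ga.
Qed.

Lemma card_Iv N a b : b <= N -> #|Iv N a b| = b - a.
Proof.
elim: b => [|b IH] bN.
  by apply/eqP; rewrite cards_eq0; apply/eqP/setP => y; rewrite !inE ltn0 andbF.
case: (leqP a b) => ab.
  have -> : Iv N a b.+1 = (Ordinal bN) |: Iv N a b.
    by apply/setP => y; rewrite !inE -val_eqE /=; apply/idP/idP; lia.
  rewrite cardsU1 IH ?(ltnW bN) // !inE /= ltnn andbF /=; lia.
have -> : Iv N a b.+1 = set0.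
  by apply/setP => y; rewrite !inE; apply/idP/idP; lia.
rewrite cards0; lia.
Qed.

Lemma memn_Iv1 N m (Y : {set 'I_N}) : 0 < m -> m <= N -> (Iv N m.-1 m \subset Y) = memn Y m.-1.
Proof.
move=> m0 mN; apply/subsetP/memnP => [H|[y yY ym] z].
  have zN : m.-1 < N by lia.
  exists (Ordinal zN) => //; apply: H; rewrite inE /=; lia.
rewrite inE => zI; have -> : z = y; last done.
apply: ord_inj; rewrite ym; move: zI; case: z => z zlt /=; lia.
Qed.

Lemma Iv_step N a b (Y : {set 'I_N}) : a < b -> b <= N ->
  (Iv N a.+1 b \subset Y) && memn Y a = (Iv N a b \subset Y).
Proof.
move=> ab bN; apply/andP/subsetP => [[/subsetP H /memnP [y yY ya]] z|H].
  rewrite inE => /andP [z1 z2]; case: (ltngtP a z) => az.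
  - by apply: H; rewrite inE az z2.
  - lia.
  - by have -> : z = y by apply: ord_inj; rewrite ya.
split; first by apply/subsetP => z; rewrite inE => zI; apply: H; rewrite inE; lia.
have aN : a < N by lia.
by apply/memnP; exists (Ordinal aN) => //; apply: H; rewrite inE /=; lia.
Qed.

Lemma memn_I N (Y : {set 'I_N}) a p : a < p -> memn (Y :&: Iv N 0 p) a = memn Y a.
Proof.
move=> ap; apply/memnP/memnP => [[y] | [y yY ya]]; first by rewrite inE => /andP [yY _]; exists y.
by exists y => //; rewrite !inE yY /=; lia.
Qed.

Lemma inv_ext N m p (Q : {set 'I_N} -> bool) (R : {set 'I_N}) :
  p < m -> inv (fun x => x < m) Q -> subw (fun x => p < x < m) R ->
  inv (fun x => x < p) (fun Z => Q (Z :|: R)).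
Proof.
move=> pm HQ /subwP sR X Y /subwP sX /subwP sY [f [f1 f2 f3 f4]] QX.
have fX : forall x, x \in X -> f x < p.
  by move=> x /f1 /memnP [y yY <-]; apply: sY.
pose f' := fun x => if x < p then f x else x.
apply: (HQ (X :|: R)) QX.
- rewrite subwU; apply/andP; split; apply/subwP => y yI.
    by have := sX y yI; lia.
  by have := sR y yI; lia.
- rewrite subwU; apply/andP; split; apply/subwP => y yI.
    by have := sY y yI; lia.
  by have := sR y yI; lia.
exists f'; split.
- move=> x; rewrite inE => /orP [xX|xR]; rewrite /f'.
    rewrite sX //; case/memnP: (f1 x xX) => y yY e.
    by apply/memnP; exists y; rewrite ?inE ?yY.
  have := sR x xR => /andP [px _]; rewrite ltnNge (ltnW px) /=.
  by apply/memnP; exists x; rewrite ?inE ?xR ?orbT.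
- move=> y; rewrite inE => /orP [yY|yR].
    case: (f2 y yY) => x xX e; exists x; first by rewrite inE xX.
    by rewrite /f' sX.
  exists y; first by rewrite inE yR orbT.
  by have := sR y yR => /andP [py _]; rewrite /f' ltnNge (ltnW py).
- move=> x y; rewrite !inE => /orP [xX|xR] /orP [yX|yR]; rewrite /f'.
  + by rewrite !sX //; apply: f3.
  + have := fX x xX; have := sR y yR; rewrite sX //.
    case: (ltnP y p) => yp; lia.
  + have := fX y yX; have := sR x xR; rewrite (sX y) //.
    case: (ltnP x p) => xp; lia.
  + have := sR x xR; have := sR y yR.
    case: (ltnP x p); case: (ltnP y p) => ? ? ? ? e; try lia.
    exact: ord_inj.
- move=> x y; rewrite !inE => /orP [xX|xR] /orP [yX|yR]; rewrite /f'.
  + by rewrite !sX //; apply: f4.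
  + have xp := sX x xX; have := fX x xX; have := sR y yR; rewrite xp.
    case: (ltnP y p) => yp; rewrite /path_adj; lia.
  + have yp := sX y yX; have := fX y yX; have := sR x xR; rewrite yp.
    case: (ltnP x p) => xp; rewrite /path_adj; lia.
  + have := sR x xR; have := sR y yR.
    by case: (ltnP x p); case: (ltnP y p) => ? ? ? ?; try lia.
Qed.

Lemma restrict N m p (Q P : {set 'I_N} -> bool) :
  p < m -> m <= N -> (forall Y, P (Y :&: Iv N 0 p) = P Y) ->
  cnt (fun x => x < m) Q (fun Y => [&& P Y, Iv N p.+1 m \subset Y & ~~ memn Y p]) =
  cnt (fun x => x < p) (fun Z => Q (Z :|: Iv N p.+1 m)) P.
Proof.
move=> pm mN HP.
have eA : forall Y : {set 'I_N}, subw (fun x => x < m) Y -> Iv N p.+1 m \subset Y -> ~~ memn Y p ->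
    (Y :&: Iv N 0 p) :|: Iv N p.+1 m = Y.
  move=> Y /subwP sY /subsetP RY pY; apply/setP => y; rewrite !inE.
  apply/idP/idP => [/orP [/andP [] //|yR]|yY]; first by apply: RY; rewrite inE.
  have := sY y yY; case: (ltngtP y p) => yp ym; rewrite ?yY ?yp ?ym //=.
  by case/memnP: pY; exists y.
have eB : forall Z : {set 'I_N}, subw (fun x => x < p) Z -> (Z :|: Iv N p.+1 m) :&: Iv N 0 p = Z.
  move=> Z /subwP sZ; apply/setP => y; rewrite !inE.
  case yZ: (y \in Z) => /=; first by have := sZ y yZ; lia.
  lia.
apply: (card_bij (F := fun Y => Y :&: Iv N 0 p) (G := fun Z => Z :|: Iv N p.+1 m)).
- move=> Y; rewrite !inE => /and3P [sY QY /and3P [PY RY pY]].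
  rewrite -(eA Y) // in QY; rewrite QY HP PY andbT /= andbT.
  by apply/subwP => y; rewrite !inE => /andP [_ /andP [_ ->]].
- move=> Z; rewrite !inE => /and3P [sZ QZ PZ].
  rewrite QZ subwU (subw_mono _ sZ); last by move=> x; lia.
  rewrite -HP eB // PZ subsetUr /=.
  apply/andP; split.
    by apply/subwP => y; rewrite !inE => /andP [_ ->].
  apply/memnP => [[y]]; rewrite !inE => /orP [yZ|/andP [yp _]] e.
    by move/subwP: sZ => /(_ y yZ); lia.
  lia.
- by move=> Y; rewrite inE => /and3P [sY _ /and3P [_ RY pY]]; apply: eA.
- by move=> Z; rewrite inE => /and3P [sZ _ _]; apply: eB.
Qed.

Lemma cnt_mem0 N (D : pred nat) (Q : {set 'I_N} -> bool) i :
  (forall Y, subw D Y -> Q Y -> #|Y| = 0) -> cnt D Q (memn^~ i) = 0.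
Proof.
move=> Hc; apply/eqP; rewrite cards_eq0; apply/eqP/setP => Y; rewrite !inE.
apply/negbTE/and3P => [[sY QY /memnP [y yY _]]].
have /eqP := Hc Y sY QY; rewrite cards_eq0 => /eqP Y0; by rewrite Y0 inE in yY.
Qed.

Lemma card_ge N (Y R : {set 'I_N}) (y : 'I_N) : R \subset Y -> y \in Y -> y \notin R -> #|R|.+1 <= #|Y|.
Proof.
move=> RY yY yR; have := subset_leq_card (_ : y |: R \subset Y).
rewrite cardsU1 yR; apply; by rewrite subUset sub1set yY RY.
Qed.

Lemma card_disjU N (A B : {set 'I_N}) : (forall y, y \in A -> y \in B -> False) -> #|A :|: B| = #|A| + #|B|.
Proof.
move=> H; rewrite cardsU; suff -> : A :&: B = set0 by rewrite cards0 subn0.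
by apply/setP => y; rewrite !inE; apply/andP => [[]] /H H' /H'.
Qed.

Lemma mainc N m : m <= N -> forall s (Q : {set 'I_N} -> bool),
  inv (fun x => x < m) Q -> (forall Y, subw (fun x => x < m) Y -> Q Y -> #|Y| = s) ->
  forall i1 i2, s <= i1.+1 -> i1 + s <= m -> s <= i2.+1 -> i2 + s <= m ->
  cnt (fun x => x < m) Q (memn^~ i1) = cnt (fun x => x < m) Q (memn^~ i2).
Proof.
move: m; elim/ltn_ind => m IH mN [|s] Q HQ Hc.
  by move=> i1 i2 *; rewrite !cnt_mem0.
pose c i := cnt (fun x => x < m) Q (memn^~ i).
pose DD i := cnt (fun x => x < m) Q (fun Y => memn Y i && memn Y m.-1).
have Dsym : forall i i', s <= i -> i + s.+2 <= m -> s <= i' -> i' + s.+2 <= m -> DD i = DD i'.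
  pose F r i := cnt (fun x => x < m) Q (fun Y => memn Y i && (Iv N (m - r) m \subset Y)).
  pose G r i := cnt (fun x => x < m) Q
     (fun Y => [&& memn Y i, Iv N (m - r) m \subset Y & ~~ memn Y (m - r.+1)]).
  have E1 : forall i, i < m -> DD i = F 1 i.
    move=> i im; apply: cnt_ext => Y _; rewrite subn1 memn_Iv1 //; lia.
  have Fs : forall i, i + s.+2 <= m -> F s.+1 i = 0.
    move=> i hi; apply/eqP; rewrite cards_eq0; apply/eqP/setP => Y; rewrite !inE.
    apply/negbTE/and3P => [[sY QY /andP [/memnP [y yY yi] RY]]].
    have := card_ge RY yY; rewrite card_Iv // Hc // inE yi.
    have -> : m - (m - s.+1) = s.+1 by lia.
    have -> : (m - s.+1 <= i < m) = false by lia.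
    by rewrite ltnn => /(_ isT).
  have FG : forall r i, r < m -> F r i = G r i + F r.+1 i.
    move=> r i rm; rewrite /F (cnt_split _ _ _ (fun Y => memn Y (m - r.+1))) addnC.
    congr (_ + _); apply: cnt_ext => Y _.
      by rewrite -andbA.
    have -> : m - r = (m - r.+1).+1 by lia.
    by rewrite -andbA Iv_step //; lia.
  have Geq : forall r i i', 0 < r -> r <= s -> s <= i -> i + s.+2 <= m ->
      s <= i' -> i' + s.+2 <= m -> G r i = G r i'.
    move=> r i i' r0 rs hi1 hi2 hi1' hi2'.
    have pm : m - r.+1 < m by lia.
    have e : forall i0, i0 < m - r.+1 -> G r i0 =
        cnt (fun x => x < m - r.+1) (fun Z => Q (Z :|: Iv N (m - r.+1).+1 m)) (memn^~ i0).
      move=> i0 hi0; rewrite /G.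
      have -> : m - r = (m - r.+1).+1 by lia.
      by apply: restrict => // Y; apply: memn_I.
    rewrite !e; try lia.
    apply: (IH (m - r.+1) pm _ (s.+1 - r)); try lia.
      apply: inv_ext pm HQ _; apply/subwP => y; rewrite inE; lia.
    move=> Z sZ QZ; have sZR : subw (fun x => x < m) (Z :|: Iv N (m - r.+1).+1 m).
      rewrite subwU (subw_mono _ sZ); last by move=> x; lia.
      by apply/subwP => y; rewrite inE; lia.
    have := Hc _ sZR QZ; rewrite card_disjU ?card_Iv //; first lia.
    by move=> y yZ; move/subwP: sZ => /(_ y yZ); rewrite inE; lia.
  have Find : forall t i i', t <= s -> s <= i -> i + s.+2 <= m ->
      s <= i' -> i' + s.+2 <= m -> F (s.+1 - t) i = F (s.+1 - t) i'.
    elim=> [|t IHt] i i' ht hi1 hi2 hi1' hi2'; first by rewrite subn0 !Fs.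
    have -> : s.+1 - t.+1 = s - t by lia.
    rewrite !(FG (s - t)); try lia.
    rewrite (Geq (s - t) i i'); try lia.
    have -> : (s - t).+1 = s.+1 - t by lia.
    by rewrite (IHt i i') //; lia.
  move=> i i' hi1 hi2 hi1' hi2'; rewrite !E1; try lia.
  by have := Find s i i' (leqnn s) hi1 hi2 hi1' hi2'; rewrite subSnn.
have step : forall j, s <= j -> j + s.+2 <= m -> c j = c j.+1.
  move=> j hj1 hj2; rewrite /c (cnt_split _ _ _ (memn^~ m.-1)).
  rewrite [RHS](cnt_split _ _ _ (memn^~ 0)).
  have -> : cnt (fun x => x < m) Q (fun Y => memn Y j.+1 && memn Y 0) = DD (m - j.+2).
    apply: (transport_inv (f := fun x => m.-1 - x) (g := fun x => m.-1 - x) HQ); try by move=> *; lia.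
    - by move=> x y hx hy; rewrite /path_adj; lia.
    move=> Y sY; rewrite (memn_img_in (D := fun x => x < m) (a := j.+1)) //; try by move=> *; lia.
    by rewrite (memn_img_in (D := fun x => x < m) (a := 0)) //; try by move=> *; lia.
  have -> : cnt (fun x => x < m) Q (fun Y => memn Y j && ~~ memn Y m.-1) =
            cnt (fun x => x < m.-1) Q (memn^~ j).
    apply: cnt_ext => Y _.
    rewrite (subw_eq (D := fun x => x < m.-1) (D' := fun x => (x < m) && (x != m.-1))); last by move=> x; lia.
    by rewrite subw_notmem; case: (subw _ Y); case: (memn Y j); case: (memn Y m.-1).
  have -> : cnt (fun x => x < m) Q (fun Y => memn Y j.+1 && ~~ memn Y 0) =
            cnt (fun x => 0 < x < m) Q (memn^~ j.+1).
    apply: cnt_ext => Y _.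
    rewrite (subw_eq (D := fun x => 0 < x < m) (D' := fun x => (x < m) && (x != 0))); last by move=> x; lia.
    by rewrite subw_notmem; case: (subw _ Y); case: (memn Y j.+1); case: (memn Y 0).
  congr (_ + _); first by apply: Dsym; lia.
  apply: (transport_inv (f := S) (g := predn) HQ); try by move=> *; lia.
  - by move=> x y hx hy; rewrite /path_adj; lia.
  move=> Y sY; rewrite (memn_img_in (D := fun x => x < m.-1) (a := j)) //; by move=> *; lia.
move=> i1 i2 h1 h2 h3 h4.
have chain : forall d i, s <= i -> i + d + s.+1 <= m -> c i = c (i + d).
  elim=> [|d IHd] i hi hd; first by rewrite addn0.
  rewrite IHd //; last lia.
  rewrite addnS; apply: step; lia.
wlog le : i1 i2 h1 h2 h3 h4 / i1 <= i2.
  move=> W; case: (leqP i1 i2) => l; first exact: W.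
  by symmetry; apply: W => //; exact: ltnW.
rewrite -(subnKC le); apply: chain; lia.
Qed.

Lemma iso_induced N (T : finType) (e : rel T) (X Y : {set 'I_N}) :
  iso X Y -> induced_iso X e -> induced_iso Y e.
Proof.
case=> f [f1 f2 f3 f4] /existsP [g /and3P [/injectiveP ig /eqP gX /forallP ge]].
have gin : forall u, g u \in X by move=> u; rewrite -gX; apply: imset_f; rewrite inE.
have fN : forall u, f (g u) < N by move=> u; case/memnP: (f1 _ (gin u)) => y _ <-.
pose g' := [ffun u => (Ordinal (fN u) : 'I_N)].
apply/existsP; exists g'; apply/and3P; split.
- apply/injectiveP => u v; rewrite !ffunE => /(congr1 (@nat_of_ord N)) /= /f3.
  by move=> /(_ (gin u) (gin v)) /ig.
- apply/eqP/setP => y; apply/imsetP/idP => [[u _ ->]|yY].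
    rewrite ffunE; case/memnP: (f1 _ (gin u)) => z zY ez.
    by have -> : Ordinal (fN u) = z by apply: ord_inj.
  case: (f2 y yY) => x; rewrite -gX => /imsetP [u _ ->] e'.
  by exists u; rewrite ?inE // ffunE; apply: ord_inj.
- apply/forallP => u; apply/forallP => v; rewrite !ffunE /= f4 ?gin //.
  by have /forallP := ge u; move/(_ v).
Qed.

Lemma induced_card N (T : finType) (e : rel T) (X : {set 'I_N}) : induced_iso X e -> #|X| = #|T|.
Proof. by case/existsP => g /and3P [/injectiveP ig /eqP gX _]; rewrite -gX card_imset // cardsT. Qed.

Lemma cnt_neg N (D : pred nat) (Q P : {set 'I_N} -> bool) :
  cnt D Q (fun Y => ~~ P Y) = cnt D Q (fun _ => true) - cnt D Q P.
Proof. by rewrite (cnt_split D Q (fun _ => true) P) addKn. Qed.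

Lemma sp_small n h (T : finType) (e : rel T) : #|T| <= 1 -> 1 <= h <= n ->
  s_prime n h e = (#|T| == 1) && [exists x : 'I_n, induced_iso [set x] e].
Proof.
move=> T1 hn; have wn : h.-1 < n by lia.
pose w := Ordinal wn.
have Q1 : forall x y : 'I_n, induced_iso [set x] e -> induced_iso [set y] e.
  move=> x y; apply: iso_induced; exists (fun _ => nat_of_ord y); split.
  - by move=> z _; apply/memnP; exists y; rewrite ?inE.
  - by move=> z; rewrite inE => /eqP ->; exists x; rewrite ?inE.
  - by move=> a b; rewrite !inE => /eqP -> /eqP ->.
  - by move=> a b; rewrite !inE => /eqP -> /eqP ->; rewrite /path_adj; lia.
have sing : forall X : {set 'I_n}, #|X| = 1 -> memn X w -> X = [set w].
  move=> X /eqP /cards1P [y ->] /memnP [x]; rewrite inE => /eqP -> yw.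
  by congr [set _]; apply: ord_inj.
have eS : [set X : {set 'I_n} | [&& [exists x in X, val x == wv h],
           [forall x in X, ~~ path_adj (wv h) (val x)] & induced_iso X e]] =
          if (#|T| == 1) && induced_iso [set w] e then [set [set w]] else set0.
  apply/setP => X; rewrite inE; case: ifP => [/andP [/eqP T1' Qw]|H]; rewrite ?inE.
    apply/idP/eqP => [/and3P [mX _ QX]|->].
      by apply: sing => //; rewrite (induced_card QX).
    apply/and3P; split => //.
      by apply/exists_inP; exists w; rewrite ?inE.
    by apply/forall_inP => x; rewrite inE => /eqP ->; rewrite /path_adj /wv /=; lia.
  apply/negbTE/and3P => [[mX _ QX]].
  have mX' : memn X w by [].
  have X1 : #|X| = 1.
    case/memnP: mX' => x xX _; have : 0 < #|X| by apply/card_gt0P; exists x.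
    rewrite (induced_card QX); lia.
  move: H; rewrite -(induced_card QX) X1 eqxx /= -(sing X) //.
  by rewrite QX.
rewrite /s_prime eS; case: ifP => [/andP [/eqP -> Qw]|H].
  rewrite cards1 eqxx /=; suff -> : [exists x : 'I_n, induced_iso [set x] e] by [].
  by apply/existsP; exists w.
suff -> : (#|T| == 1) && [exists x : 'I_n, induced_iso [set x] e] = false by rewrite cards0.
apply/negbTE/negP => /andP [T1' /existsP [x Qx]].
by move: H; rewrite T1' (Q1 x w Qx).
Qed.

Lemma valE n (x : 'I_n) : val x = nat_of_ord x.
Proof. by []. Qed.

Ltac arith_ifs := repeat (case: ifP => ? /=); lia.

Lemma sp_big n h (T : finType) (e : rel T) : 2 <= h -> h.+1 <= n ->
  s_prime n h e = cnt (fun x => x < n.-2)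
     (fun Z : {set 'I_n} => induced_iso (Z :|: Iv n n.-2.+1 n) e) (fun Y => ~~ memn Y h.-2).
Proof.
move=> h2 hn.
pose Q := fun X : {set 'I_n} => induced_iso X e.
have HQ : inv (fun x => x < n) Q by move=> X Y _ _; apply: iso_induced.
pose w := h.-1.
have R1 : s_prime n h e = cnt (fun x => [&& x < n, x != w.+1 & x.+1 != w]) Q (memn^~ w).
  rewrite /s_prime /cnt; apply: eq_card => X; rewrite !inE.
  change [exists x in X, val x == wv h] with (memn X w).
  have -> : [forall x in X, ~~ path_adj (wv h) (val x)] =
            subw (fun x => [&& x < n, x != w.+1 & x.+1 != w]) X.
    apply/forall_inP/subwP => H x xX; have := H x xX; rewrite ?valE /path_adj /wv /w;
      have := ltn_ord x; lia.
  by rewrite /Q; case: (memn X w); case: (induced_iso X e); rewrite ?andbT ?andbF ?andTb ?andFb.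
have R2 : cnt (fun x => [&& x < n, x != w.+1 & x.+1 != w]) Q (memn^~ w) =
          cnt (fun y => [&& y < n, y != w.-1 & y != n.-2]) Q (memn^~ n.-1).
  apply: (transport_inv (W := fun x => x < n)
     (f := fun x => if x == w then n.-1 else if x < w then x else x - 2)
     (g := fun y => if y == n.-1 then w else if y < w then y else y.+2) HQ).
  - by move=> x; lia.
  - by move=> x; lia.
  - by move=> x hx; arith_ifs.
  - by move=> x hx; arith_ifs.
  - move=> x hx; case: (boolP (x == w)) => c1; rewrite ?c1 /=; first by arith_ifs.
    by case: (boolP (x < w)) => c2; rewrite ?c2 /=; arith_ifs.
  - move=> x hx; case: (boolP (x == n.-1)) => c1; rewrite ?c1 /=; first by arith_ifs.
    by case: (boolP (x < w)) => c2; rewrite ?c2 /=; arith_ifs.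
  - by move=> x hx; arith_ifs.
  - by move=> x hx; arith_ifs.
  - by move=> x y hx hy; rewrite /path_adj; arith_ifs.
  move=> Y sY; apply: (memn_img_in (D := fun x => [&& x < n, x != w.+1 & x.+1 != w]) (a := w) sY).
  - by move=> x hx; arith_ifs.
  - by move=> x y hx hy; arith_ifs.
  - lia.
  - by arith_ifs.
have R3 : cnt (fun y => [&& y < n, y != w.-1 & y != n.-2]) Q (memn^~ n.-1) =
    cnt (fun x => x < n) Q (fun Y => [&& ~~ memn Y w.-1, Iv n n.-2.+1 n \subset Y & ~~ memn Y n.-2]).
  apply: cnt_ext => Y _.
  rewrite (subw_eq (D' := fun x => ((x < n) && (x != w.-1)) && (x != n.-2))); last by move=> x; lia.
  rewrite !subw_notmem (_ : n.-2.+1 = n.-1); last lia.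
  by rewrite (@memn_Iv1 n n Y); lia.
rewrite R1 R2 R3 (@restrict n n n.-2 Q (fun Y => ~~ memn Y w.-1)) //; try lia.
by move=> Y; rewrite memn_I //; lia.
Qed.

Theorem lemma2p3 (T : finType) (e : rel T) (k n : nat) :
  symmetric e -> linear_forest e -> #|T| = k ->
  forall h1 h2 : nat,
    1 <= h1 <= n -> 1 <= h2 <= n ->
    k <= h1 <= n - k + 1 -> k <= h2 <= n - k + 1 ->
    s_prime n h1 e = s_prime n h2 e.
Proof.
move=> esym lf Tk h1 h2 hh1 hh2 /andP [k1 k1'] /andP [k2 k2'].
case: (leqP k 1) => kk.
  by rewrite !sp_small ?Tk.
rewrite !sp_big; try lia.
have HQ : inv (fun x => x < n) (fun X : {set 'I_n} => induced_iso X e).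
  by move=> X Y _ _; apply: iso_induced.
have M : cnt (fun x => x < n.-2) (fun Z : {set 'I_n} => induced_iso (Z :|: Iv n n.-2.+1 n) e)
           (memn^~ h1.-2) =
         cnt (fun x => x < n.-2) (fun Z : {set 'I_n} => induced_iso (Z :|: Iv n n.-2.+1 n) e)
           (memn^~ h2.-2).
  apply: (@mainc n n.-2 _ k.-1); try lia.
    apply: (inv_ext (m := n)) HQ _; first lia.
    by apply/subwP => y; rewrite inE; lia.
  move=> Z sZ QZ.
  have sZR : subw (fun x => x < n) (Z :|: Iv n n.-2.+1 n).
  rewrite subwU (subw_mono _ sZ); last by move=> x; lia.
  by apply/subwP => y; rewrite inE; lia.
have := induced_card QZ; rewrite card_disjU ?card_Iv // ?Tk; first lia.
by move=> y yZ; move/subwP: sZ => /(_ y yZ); rewrite inE; lia.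
by rewrite (cnt_neg _ _ (memn^~ h1.-2)) (cnt_neg _ _ (memn^~ h2.-2)) M.
Qed.
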